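(* Let $G=(V,E)$ be a connected simple graph with $n$ vertices. Then (a) $$\sum_{uv\in E}\frac{1}{|N(u)\cap N(v)|+2}\ \ge\ \frac{n-1}{2},$$ where the sum runs over the edges of $G$ (each edge counted once); (b) equality holds in (a) if and only if every biconnected component of $G$ is a clique.
   Context: For a vertex $u$, $N(u)=\{v\in V: uv\in E\}$ is its open neighbourhood (so $u\notin N(u)$), and $N(u)\cap N(v)$ is the set of common neighbours of $u$ and $v$. A biconnected component (block) of $G$ is a maximal connected subgraph of $G$ that has no cut vertex of its own; in particular a bridge together with its two endpoints forms a biconnected component (isomorphic to $K_2$). *)

(* Defs.v *)
(* Finite simple graph = symmetric irreflexive rel on a finType. *)
From HB Require Import structures.
From mathcomp Require Import all_boot all_order all_algebra.
Set Implicit Arguments. Unset Strict Implicit. Unset Printing Implicit Defensive.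

Section Graph.
Variables (T : finType) (e : rel T).

Definition connected_graph : Prop := forall x y : T, connect e x y.

Definition edges : {set {set T}} :=
  [set f : {set T} | [exists u, exists v, e u v && (f == [set u; v])]].

Definition common_nbhd (f : {set T}) : {set T} :=
  [set w | [forall x in f, e x w]].

Definition induced_rel (A : {set T}) : rel T :=
  [rel x y | [&& e x y, x \in A & y \in A]].

(* the induced subgraph G[A] is connected (vacuous for A empty) *)
Definition conn_set (A : {set T}) : bool :=
  [forall x in A, forall y in A, connect (induced_rel A) x y].

Definition biconnected_set (A : {set T}) : bool :=
  [&& A != set0, conn_set A & [forall v in A, conn_set (A :\ v)]].

Definition block (A : {set T}) : bool := maxset biconnected_set A.

Definition clique (A : {set T}) : bool :=
  [forall x in A, forall y in A, (x != y) ==> e x y].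

End Graph.

(* Main.v *)
Require Import Defs.
From HB Require Import structures.
From mathcomp Require Import all_boot all_order all_algebra all_fingroup.
From mathcomp Require Import zify ring.
Set Implicit Arguments. Unset Strict Implicit. Unset Printing Implicit Defensive.


Section Conn.
Variables (T : finType) (e : rel T).
Hypotheses (e_sym : symmetric e) (e_irr : irreflexive e).

Notation cS A := (connect (induced_rel e A)).

Lemma ind_sym A : symmetric (induced_rel e A).
Proof. by move=> x y; rewrite /induced_rel /= e_sym; case: (x \in A); case: (y \in A); rewrite ?andbF. Qed.

Lemma cS_sym A x y : cS A x y = cS A y x.
Proof. exact: (sym_connect_sym (ind_sym A)). Qed.

Lemma connect_closed (f R : rel T) : reflexive R -> transitive R ->
  subrel f R -> subrel (connect f) R.
Proof.
move=> Rr Rt fR x y /connectP [p]; elim: p x => [|a p IH] x /=.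
  by move=> _ ->.
by case/andP=> fxa pa ly; apply: Rt (fR _ _ fxa) (IH _ pa ly).
Qed.

Lemma cS_in (A : {set T}) x y : cS A x y -> x != y -> (x \in A) && (y \in A).
Proof.
move=> c nxy.
have : (x == y) || (x \in A) && (y \in A).
  apply: (connect_closed (R := fun x y => (x == y) || (x \in A) && (y \in A))) c.
  - by move=> z; rewrite eqxx.
  - move=> b a c /orP [/eqP -> // | /andP [Ha Hb]] /orP [/eqP <- | /andP [_ Hc]].
      by rewrite Ha Hb orbT.
    by rewrite Ha Hc orbT.
  - by move=> a b /= /and3P [_ -> ->]; rewrite orbT.
by rewrite (negbTE nxy).
Qed.

Lemma cS_mono (A B : {set T}) x y : A \subset B -> cS A x y -> cS B x y.
Proof.
move=> sAB; apply: connect_sub => a b /= /and3P [eab Ha Hb].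
by apply: connect1; rewrite /induced_rel /= eab (subsetP sAB _ Ha) (subsetP sAB _ Hb).
Qed.

Lemma cS_edge (A : {set T}) x y : e x y -> x \in A -> y \in A -> cS A x y.
Proof. by move=> exy Hx Hy; apply: connect1; rewrite /induced_rel /= exy Hx Hy. Qed.

Lemma cN2 u v w : (w \in common_nbhd e [set u; v]) = e u w && e v w.
Proof.
rewrite inE; apply/forall_inP/andP => [H | [H1 H2] x].
  by split; apply: H; rewrite !inE eqxx ?orbT.
by rewrite !inE => /orP [] /eqP ->.
Qed.

Lemma edgesP f : reflect (exists u v, e u v /\ f = [set u; v]) (f \in edges e).
Proof.
rewrite inE; apply: (iffP existsP) => [[u /existsP [v /andP [euv /eqP ->]]] | [u [v [euv ->]]]].
  by exists u, v.
by exists u; apply/existsP; exists v; rewrite euv eqxx.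
Qed.

Variable r : T -> nat.
Hypothesis r_inj : injective r.
Implicit Types (S : {set T}).

Definition goodf (f : {set T}) :=
  [forall w in common_nbhd e f, [exists x in f, r x < r w]].
Definition pre i := [set x | r x < i].
Definition goodS (S : {set T}) := #|[set f in edges e | (f \subset S) && goodf f]|.
Definition Lead S := [set x in S | [forall y, cS S x y ==> (r x <= r y)]].
Definition leader S x := [arg min_(y < x | cS S x y) r y].

Lemma leaderP1 S x : cS S x (leader S x).
Proof. by rewrite /leader; case: arg_minnP => //; exact: connect0. Qed.

Lemma leaderP2 S x y : cS S x y -> r (leader S x) <= r y.
Proof. by rewrite /leader; case: arg_minnP => [|l _ H]; [exact: connect0|apply: H]. Qed.

Lemma leader_in S x : x \in S -> leader S x \in S.
Proof.
move=> Hx; case: (eqVneq x (leader S x)) => [<- // | ne].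
by case/andP: (cS_in (leaderP1 S x) ne).
Qed.

Lemma leaderL S x : x \in S -> leader S x \in Lead S.
Proof.
move=> Hx; rewrite inE leader_in //=; apply/forallP => y; apply/implyP => c.
apply: leaderP2; apply: connect_trans (leaderP1 S x) c.
Qed.

Lemma leader_eq S x y : y \in Lead S -> cS S x y -> leader S x = y.
Proof.
rewrite inE => /andP [_ /forallP H] c; apply: r_inj; apply/eqP; rewrite eqn_leq.
rewrite leaderP2 //=; move/implyP: (H (leader S x)); apply.
by rewrite cS_sym in c; apply: connect_trans c (leaderP1 S x).
Qed.


Definition touched S z x := [exists u, [&& u \in S, e u z & cS S x u]].
Definition Tz S z x := (x == z) || touched S z x.

Lemma Tz_trans S z x y : z \notin S -> cS S x y -> Tz S z y -> Tz S z x.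
Proof.
move=> zS c /orP [/eqP Hy | /existsP [u /and3P [uS euz cyu]]].
  subst y; case: (eqVneq x z) => [->|nx]; first by rewrite /Tz eqxx.
  by case/andP: (cS_in c nx) => _; rewrite (negbTE zS).
apply/orP; right; apply/existsP; exists u; rewrite uS euz; exact: connect_trans c cyu.
Qed.

Lemma KC S z x y : z \notin S -> cS (z |: S) x y = cS S x y || (Tz S z x && Tz S z y).
Proof.
move=> zS; apply/idP/idP.
- apply: (connect_closed (R := fun x y => cS S x y || (Tz S z x && Tz S z y))).
  + by move=> a; rewrite connect0.
  + move=> b a c /orP [Hab | /andP [Ta Tb]] /orP [Hbc | /andP [Tb' Tc]].
    * by rewrite (connect_trans Hab Hbc).
    * by rewrite (Tz_trans zS Hab Tb') Tc orbT.
    * by rewrite cS_sym in Hbc; rewrite Ta (Tz_trans zS Hbc Tb) orbT.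
    * by rewrite Ta Tc orbT.
  + move=> a b; rewrite /induced_rel /= !inE => /and3P [eab Ha Hb].
    case/orP: Ha => [/eqP Ha | Ha]; case/orP: Hb => [/eqP Hb | Hb].
    * by subst; rewrite e_irr in eab.
    * subst a; apply/orP; right; rewrite /Tz eqxx /=; apply/orP; right.
      by apply/existsP; exists b; rewrite Hb (e_sym b z) eab connect0.
    * subst b; apply/orP; right; rewrite /Tz eqxx /= andbT; apply/orP; right.
      by apply/existsP; exists a; rewrite Ha eab connect0.
    * by apply/orP; left; exact: cS_edge.
- case/orP => [c | /andP [Tx Ty]]; first by apply: cS_mono c; apply: subsetUr.
  have Hz w : Tz S z w -> cS (z |: S) w z.
    case/orP => [/eqP -> | /existsP [u /and3P [uS euz cwu]]]; first exact: connect0.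
    apply: connect_trans (cS_mono (subsetUr _ _) cwu) _; apply: cS_edge => //;
      by rewrite !inE ?eqxx ?uS ?orbT.
  by apply: connect_trans (Hz _ Tx) _; rewrite cS_sym; apply: Hz.
Qed.

Lemma lead_step S z : z \notin S ->
  #|Lead (z |: S)| + #|Lead S :&: [set x | touched S z x]| = #|Lead S| + 1.
Proof.
move=> zS.
have nTz y : ~~ Tz S z y -> forall w, cS (z |: S) y w = cS S y w.
  by move=> H w; rewrite KC // (negbTE H) andFb orbF.
set l := leader (z |: S) z.
have Tl : Tz S z l.
  have c : cS (z |: S) z l by exact: leaderP1.
  rewrite KC // in c; case/orP: c => [c | /andP [_ ->] //].
  case: (eqVneq z l) => [<-|ne]; first by rewrite /Tz eqxx.
  by case/andP: (cS_in c ne); rewrite (negbTE zS).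
have E : Lead (z |: S) = l |: (Lead S :\: [set x | touched S z x]).
  apply/setP => y; apply/idP/idP.
  + move=> Hy; case Ty: (Tz S z y).
    * have c : cS (z |: S) z y by rewrite KC // Ty /Tz eqxx orbT.
      by rewrite /l (leader_eq Hy c) setU11.
    * apply/setU1P; right; apply/setDP; split; last first.
        by rewrite inE; apply: contraFN Ty => H; rewrite /Tz H orbT.
      move: Hy; rewrite inE => /andP [yS' /forallP H].
      rewrite inE; apply/andP; split.
        by move: yS'; rewrite !inE => /orP [/eqP yz|//]; move: Ty; rewrite /Tz yz eqxx.
      by apply/forallP => w; rewrite -nTz ?Ty //; exact: H w.
  + case/setU1P => [->| /setDP [Hy nt]]; first by apply: leaderL; rewrite setU11.
    have yz : y != z.
      by apply: contraTneq Hy => ->; rewrite inE (negbTE zS).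
    have nT : ~~ Tz S z y by rewrite /Tz negb_or yz; move: nt; rewrite inE.
    move: Hy; rewrite inE => /andP [yS /forallP H].
    rewrite inE !inE yS orbT /=; apply/forallP => w; rewrite nTz //; exact: H w.
rewrite E cardsU1.
have -> : l \notin Lead S :\: [set x | touched S z x].
  apply/negP => /setDP [H1]; rewrite inE => H2.
  move: Tl; rewrite /Tz (negbTE H2) orbF => /eqP lz.
  by move: H1; rewrite inE lz (negbTE zS).
by have := cardsID [set x | touched S z x] (Lead S); rewrite /=; lia.
Qed.

Definition Mset S z := [set u in S | e u z && goodf [set u; z]].

Lemma ML S z : z \notin S -> (forall w, (w \in S) = (r w < r z)) ->
  Lead S :&: [set x | touched S z x] = leader S @: Mset S z.
Proof.
move=> zS preS; apply/setP => x; apply/idP/idP.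
- rewrite inE => /andP [xL]; rewrite inE => /existsP [u0 /and3P [u0S eu0 cxu0]].
  pose P u := [&& u \in S, e u z & cS S x u].
  have P0 : P u0 by rewrite /P u0S eu0 cxu0.
  case: (arg_minnP r P0) => u /and3P [uS euz cxu] umin.
  have uM : u \in Mset S z.
    rewrite inE uS euz /=; apply/forall_inP => w; rewrite cN2 => /andP [euw ezw].
    apply/existsP; exists u; rewrite !inE eqxx /=.
    rewrite ltnNge; apply/negP => rwu.
    have wu : w != u by apply/eqP => wu; subst; rewrite e_irr in euw.
    have rwu' : r w < r u.
      rewrite ltn_neqAle rwu andbT; apply: contra wu => /eqP H; apply/eqP; exact: r_inj.
    have wS : w \in S by rewrite preS (ltn_trans rwu') // -preS.
    have := umin w; rewrite /P wS (e_sym w z) ezw /= (connect_trans cxu (cS_edge euw uS wS)).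
    by move=> /(_ isT); rewrite leqNgt rwu'.
  apply/imsetP; exists u => //; symmetry; apply: leader_eq => //; by rewrite cS_sym.
- case/imsetP => u; rewrite inE => /andP [uS /andP [euz _]] ->.
  rewrite inE leaderL //= inE; apply/existsP; exists u.
  by rewrite uS euz cS_sym leaderP1.
Qed.

Definition Blk := forall v u1 u2, e v u1 -> e v u2 -> u1 != u2 ->
  cS [set~ v] u1 u2 -> e u1 u2.

Lemma M_noedge S z u1 u2 : (forall w, (w \in S) = (r w < r z)) ->
  u1 \in Mset S z -> u2 \in Mset S z -> e u1 u2 -> r u1 < r u2 -> False.
Proof.
move=> preS; rewrite /Mset !inE => /andP [u1S /andP [e1 _]] /andP [u2S /andP [e2 g2]] e12 lt.
move/forall_inP: g2 => /(_ u1); rewrite cN2 (e_sym u2 u1) e12 (e_sym z u1) e1.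
move=> /(_ isT) /existsP [y]; rewrite !inE => /andP [/orP [] /eqP -> ].
  by rewrite ltnNge ltnW.
by rewrite ltnNge ltnW // -preS.
Qed.

Lemma subS_setC S z : z \notin S -> S \subset [set~ z].
Proof. by move=> zS; apply/subsetP => w wS; rewrite !inE; apply: contraNneq zS => <-. Qed.

Lemma ML_le S z : z \notin S -> (forall w, (w \in S) = (r w < r z)) ->
  #|Lead S :&: [set x | touched S z x]| <= #|Mset S z|.
Proof. by move=> zS preS; rewrite ML // leq_imset_card. Qed.

Lemma ML_eq S z : Blk -> z \notin S -> (forall w, (w \in S) = (r w < r z)) ->
  #|Lead S :&: [set x | touched S z x]| = #|Mset S z|.
Proof.
move=> blk zS preS; rewrite ML //; apply/eqP/imset_injP => u1 u2 H1 H2 El.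
case: (eqVneq u1 u2) => // ne; exfalso.
have c : cS S u1 u2.
  by apply: connect_trans (leaderP1 S u1) _; rewrite El cS_sym leaderP1.
move: (H1) (H2); rewrite !inE => /andP [u1S /andP [e1 _]] /andP [u2S /andP [e2 _]].
have e12 : e u1 u2.
  apply: (blk z) => //; rewrite ?(e_sym z) //.
  exact: cS_mono (subS_setC zS) c.
case: (ltngtP (r u1) (r u2)) => [lt|lt|eq].
- exact: (M_noedge preS H1 H2 e12 lt).
- by rewrite e_sym in e12; exact: (M_noedge preS H2 H1 e12 lt).
- by move/r_inj: eq => eq; rewrite eq eqxx in ne.
Qed.

Lemma ML_lt S z u1 u2 : z \notin S -> (forall w, (w \in S) = (r w < r z)) ->
  u1 \in Mset S z -> u2 \in Mset S z -> u1 != u2 -> cS S u1 u2 ->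
  #|Lead S :&: [set x | touched S z x]| < #|Mset S z|.
Proof.
move=> zS preS H1 H2 ne c; rewrite ML // ltn_neqAle leq_imset_card andbT.
apply/negP => /imset_injP inj.
have u2S : u2 \in S by move: H2; rewrite inE => /andP [].
have El : leader S u1 = leader S u2.
  apply: leader_eq; first exact: leaderL.
  exact: connect_trans c (leaderP1 S u2).
by move: (inj u1 u2 H1 H2 El) => eq; rewrite eq eqxx in ne.
Qed.

Lemma good_step S z : z \notin S -> (forall w, (w \in S) = (r w < r z)) ->
  goodS (z |: S) = goodS S + #|Mset S z|.
Proof.
move=> zS preS.
set A := [set f in edges e | (f \subset S) && goodf f].
set B := [set [set u; z] | u in Mset S z].
have E : [set f in edges e | (f \subset z |: S) && goodf f] = A :|: B.
  apply/setP => f; apply/idP/idP.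
  - rewrite inE => /andP [/edgesP [u [v [euv ->]]] /andP [sub g]].
    case: (boolP (z \in [set u; v])) => zin.
    + apply/setUP; right; apply/imsetP.
      have mem x : x \in [set u; v] -> x != z -> x \in S.
        by move=> xin xz; move: (subsetP sub x xin); rewrite !inE (negbTE xz).
      have uv : u != v by apply: contraTneq euv => ->; rewrite e_irr.
      case/set2P: zin => [zu | zv].
      * rewrite -zu in uv euv g mem *; exists v; last by rewrite setUC.
        rewrite inE mem ?set22 1?eq_sym //=.
        by rewrite e_sym euv /= setUC.
      * rewrite -zv in uv euv g mem *; exists u; last by [].
        by rewrite inE mem ?set21 //= euv g.
    + apply/setUP; left; rewrite inE g andbT; apply/andP; split.
        by apply/edgesP; exists u, v.
      apply/subsetP => x xf; move: (subsetP sub x xf); rewrite !inE => /orP [/eqP xz|//].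
      by subst; rewrite xf in zin.
  - case/setUP => [| /imsetP [u uM ->]].
    + rewrite !inE => /andP [fE /andP [sub g]]; rewrite fE g andbT /=.
      exact: subset_trans sub (subsetUr _ _).
    + move: uM; rewrite /Mset !inE => /andP [uS /andP [euz g]].
      apply/and3P; split; [by apply/existsP; exists u; apply/existsP; exists z; rewrite euz eqxx | | exact: g].
      by apply/subsetP => x; rewrite !inE => /orP [] /eqP ->; rewrite ?eqxx ?uS ?orbT.
rewrite /goodS E cardsU.
have -> : A :&: B = set0.
  apply/setP => f; rewrite !inE; apply/negP => /andP [/andP [_ /andP [sub _]] /imsetP [u _ Hf]].
  by subst f; move: (subsetP sub z); rewrite !inE eqxx orbT (negbTE zS) => /(_ isT).
rewrite cards0 subn0 card_in_imset //.
move=> u1 u2 H1 _ E12.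
have : u1 \in [set u2; z] by rewrite -E12 set21.
rewrite !inE => /orP [/eqP //|/eqP u1z].
by move: H1; rewrite inE u1z (negbTE zS).
Qed.

Lemma inv i : #|pre i| <= goodS (pre i) + #|Lead (pre i)| /\
  (Blk -> #|pre i| = goodS (pre i) + #|Lead (pre i)|).
Proof.
elim: i => [|i [IH1 IH2]].
  have -> : pre 0 = set0 by apply/setP => x; rewrite !inE ltn0.
  rewrite cards0; split => // _.
  have -> : Lead set0 = set0 by apply/setP => x; rewrite !inE.
  rewrite cards0 addn0 /goodS; apply/esym/eqP; rewrite cards_eq0; apply/eqP/setP => f.
  rewrite inE [RHS]inE; apply/negP => /andP [fE /andP [sub _]].
  case/edgesP: fE => u [v [_ Hf]]; subst f.
  by move: (subsetP sub u); rewrite !inE eqxx => /(_ isT).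
case: (pickP (fun z => r z == i)) => [z /eqP rz | none].
- have E : pre i.+1 = z |: pre i.
    apply/setP => x; rewrite !inE ltnS leq_eqVlt -rz.
    by congr (_ || _); apply/eqP/eqP => [/r_inj|->].
  have zS : z \notin pre i by rewrite inE rz ltnn.
  have preS w : (w \in pre i) = (r w < r z) by rewrite inE rz.
  have h1 := lead_step zS; have h2 := good_step zS preS; have h3 := ML_le zS preS.
  have h4 : #|z |: pre i| = #|pre i| + 1 by rewrite cardsU1 zS addnC.
  rewrite E h2 h4; split; first by lia.
  by move=> blk; have h5 := ML_eq blk zS preS; have := IH2 blk; lia.
- have -> : pre i.+1 = pre i.
    apply/setP => x; rewrite !inE ltnS leq_eqVlt.
    by have := none x; rewrite /= => ->.
  by split.
Qed.


Lemma cT_conn : connected_graph e -> forall x y, cS setT x y.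
Proof.
move=> conn x y; rewrite (eq_connect (e' := e)) //.
by move=> a b; rewrite /induced_rel /= !inE !andbT.
Qed.

Lemma Lead_T : connected_graph e -> 0 < #|T| -> #|Lead setT| = 1.
Proof.
move=> conn /card_gt0P [t _].
have -> : Lead setT = [set leader setT t].
  apply/setP => y; rewrite inE; apply/idP/eqP => [Hy| ->]; last by apply: leaderL; rewrite inE.
  by symmetry; apply: leader_eq => //; apply: cT_conn.
by rewrite cards1.
Qed.

Definition goodT := #|[set f in edges e | goodf f]|.

Lemma goodST : goodS setT = goodT.
Proof. by rewrite /goodS /goodT; apply: eq_card => f; rewrite !inE subsetT. Qed.

Lemma final (N : nat) : (forall x, r x < N) -> connected_graph e -> 0 < #|T| ->
  #|T| <= goodT + 1 /\ (Blk -> #|T| = goodT + 1).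
Proof.
move=> rb conn n0.
have E : pre N = setT by apply/setP => x; rewrite !inE rb.
have [h1 h2] := inv N; rewrite E goodST (Lead_T conn n0) cardsT in h1 h2.
by split.
Qed.

Lemma finalC v u1 u2 : connected_graph e ->
  e v u1 -> e v u2 -> u1 != u2 -> ~~ e u1 u2 -> cS [set~ v] u1 u2 ->
  (forall w, w != u1 -> r u1 < r w) -> (forall w, w != u1 -> w != u2 -> r u2 < r w) ->
  (forall w, w != v -> r w < r v) -> #|T| <= goodT.
Proof.
move=> conn ev1 ev2 ne n12 c h1 h2 hv.
have n0 : 0 < #|T| by apply/card_gt0P; exists v.
set S := pre (r v).
have ES : S = [set~ v].
  apply/setP => x; rewrite !inE; case: (eqVneq x v) => [->|xv]; first by rewrite ltnn.
  exact: hv.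
have vS : v \notin S by rewrite ES !inE eqxx.
have preS w : (w \in S) = (r w < r v) by rewrite inE.
have ET : v |: S = setT by apply/setP => x; rewrite ES !inE orbN.
have v1 : u1 != v by apply: contraTneq ev1 => ->; rewrite e_irr.
have v2 : u2 != v by apply: contraTneq ev2 => ->; rewrite e_irr.
have M1 : u1 \in Mset S v.
  rewrite /Mset inE ES !inE v1 e_sym ev1 /=; apply/forall_inP => w; rewrite cN2 => /andP [e1w _].
  apply/existsP; exists u1; rewrite !inE eqxx /=; apply: h1.
  by apply: contraTneq e1w => ->; rewrite e_irr.
have M2 : u2 \in Mset S v.
  rewrite /Mset inE ES !inE v2 e_sym ev2 /=; apply/forall_inP => w; rewrite cN2 => /andP [e2w _].
  apply/existsP; exists u2; rewrite !inE eqxx /=; apply: h2.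
    by apply: contraNneq n12 => <-; rewrite e_sym.
  by apply: contraTneq e2w => ->; rewrite e_irr.
have c' : cS S u1 u2 by rewrite ES.
have hl := ML_lt vS preS M1 M2 ne c'.
have h3 := lead_step vS; have h4 := good_step vS preS.
have [h5 _] := inv (r v).
rewrite ET goodST (Lead_T conn n0) in h3 h4.
have h6 : #|T| = #|S| + 1 by rewrite -cardsT -ET cardsU1 vS addnC.
rewrite -/S in h5.
lia.
Qed.

End Conn.


Section Avg.
Variables (T : finType) (e : rel T).
Hypotheses (e_sym : symmetric e) (e_irr : irreflexive e).
Implicit Types (Sf : {set T}).

Definition rk (s : {perm T}) (x : T) : nat := enum_rank (s x).

Lemma rk_inj s : injective (rk s).
Proof. by move=> x y /ord_inj /enum_rank_inj /perm_inj. Qed.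

Lemma rk_lt s x : rk s x < #|T|.
Proof. exact: ltn_ord. Qed.

Definition Pm (Sf : {set T}) x :=
  [set s : {perm T} | [forall y in Sf, (y != x) ==> (rk s x < rk s y)]].

Lemma Pm_le Sf x y : x \in Sf -> y \in Sf -> #|Pm Sf x| <= #|Pm Sf y|.
Proof.
move=> xS yS; set t := tperm x y.
rewrite -(card_imset (Pm Sf x) (mulgI t)); apply: subset_leq_card.
apply/subsetP => s' /imsetP [s sP ->].
rewrite inE; apply/forall_inP => w wS; apply/implyP => wy.
rewrite /rk !permM /t tpermR -/t.
move: sP; rewrite inE => /forall_inP /(_ (t w)) H; apply: (implyP (H _)).
  by rewrite /t; case: tpermP => // ->.
apply: contra wy => /eqP Hw; by rewrite -(tpermK x y w) -/t Hw tpermL.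
Qed.

Lemma Pm_eq Sf x y : x \in Sf -> y \in Sf -> #|Pm Sf x| = #|Pm Sf y|.
Proof. by move=> xS yS; apply/eqP; rewrite eqn_leq !Pm_le. Qed.


Lemma Pm_uniq Sf s x y : x \in Sf -> y \in Sf -> s \in Pm Sf x -> s \in Pm Sf y -> x = y.
Proof.
move=> xS yS; rewrite !inE => /forall_inP /(_ y yS) H1 /forall_inP /(_ x xS) H2.
case: (eqVneq x y) => // ne; exfalso.
have := implyP H1; rewrite eq_sym ne => /(_ isT) lt1.
have := implyP H2; rewrite ne => /(_ isT) lt2.
by have := ltn_trans lt1 lt2; rewrite ltnn.
Qed.

Lemma Pm_ex Sf s x0 : x0 \in Sf -> exists2 x, x \in Sf & s \in Pm Sf x.
Proof.
move=> x0S; case: (arg_minnP (rk s) x0S) => x xS H.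
exists x => //; rewrite inE; apply/forall_inP => y yS; apply/implyP => yx.
rewrite ltn_neqAle H // andbT; apply: contra yx => /eqP /rk_inj ->; by [].
Qed.

Lemma Pm_sum Sf x0 : x0 \in Sf -> #|Sf| * #|Pm Sf x0| = #|{perm T}|.
Proof.
move=> x0S.
have E : \sum_(x in Sf) #|Pm Sf x| = #|Sf| * #|Pm Sf x0|.
  rewrite (eq_bigr (fun _ => #|Pm Sf x0|)); first by rewrite sum_nat_const.
  by move=> x xS; apply: Pm_eq.
rewrite -E.
rewrite (eq_bigr (fun x => \sum_(s : {perm T}) (if s \in Pm Sf x then 1 else 0))); last first.
  by move=> x _; rewrite -sum1_card big_mkcond.
rewrite exchange_big /=.
rewrite (eq_bigr (fun _ => 1)); first by rewrite sum1_card.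
move=> s _; rewrite -big_mkcondr /=.
case: (Pm_ex s x0S) => x xS sP.
rewrite (big_pred1 x) //= => y /=. 
apply/andP/eqP => [[yS sy] | ->]; last by split.
exact: Pm_uniq sy sP.
Qed.

Definition Gs f := [set s : {perm T} | goodf e (rk s) f].

Lemma Gs_card u v : e u v ->
  #|Gs [set u; v]| * (#|common_nbhd e [set u; v]| + 2) = 2 * #|{perm T}|.
Proof.
move=> euv; set f := [set u; v]; set C := common_nbhd e f; set Sf := f :|: C.
have uv : u != v by apply: contraTneq euv => ->; rewrite e_irr.
have fC : [disjoint f & C].
  rewrite disjoint_subset; apply/subsetP => w wf; rewrite inE /C cN2.
  by case/set2P: wf => ->; rewrite e_irr ?andbF.
have cSf : #|Sf| = #|C| + 2.
  rewrite cardsU.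
  have -> : f :&: C = set0 by apply/eqP; rewrite setI_eq0.
  by rewrite cards0 subn0 /f cards2 uv addnC.
have uS : u \in Sf by rewrite !inE eqxx.
have vS : v \in Sf by rewrite !inE eqxx orbT.
have EG : Gs f = Pm Sf u :|: Pm Sf v.
  apply/setP => s; rewrite [in LHS]inE; apply/idP/idP.
  - move=> g; case: (Pm_ex s uS) => m mS sP.
    case/setUP: (mS) => [mf | mC].
      by apply/setUP; case/set2P: mf => <-; [left | right].
    move/forall_inP: g => /(_ m mC) /exists_inP [x xf lt].
    move: sP; rewrite inE => /forall_inP /(_ x (subsetP (subsetUl _ _) x xf)) /implyP Hx.
    have xm : x != m.
      by apply: contraTneq mC => <-; apply/negP => xC; move: (fC); rewrite disjoint_subset => /subsetP /(_ x xf); rewrite inE xC.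
    by have := Hx xm; rewrite ltnNge (ltnW lt).
  - have key x : x \in f -> s \in Pm Sf x -> goodf e (rk s) f.
      move=> xf; rewrite inE => /forall_inP H; apply/forall_inP => w wC.
      apply/exists_inP; exists x => //; apply: (implyP (H w _)); first by rewrite inE wC orbT.
      by apply: contraTneq wC => ->; apply/negP => xC; move: (fC); rewrite disjoint_subset => /subsetP /(_ x xf); rewrite inE xC.
    by case/setUP => sP; [apply: (key u) | apply: (key v)]; rewrite /f ?set21 ?set22.
rewrite EG cardsU.
have -> : Pm Sf u :&: Pm Sf v = set0.
  apply/setP => s; rewrite !inE; apply/negP => /andP [h1 h2].
  have h1' : s \in Pm Sf u by rewrite inE.
  have h2' : s \in Pm Sf v by rewrite inE.
  by move: (Pm_uniq uS vS h1' h2') => E; rewrite E eqxx in uv.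
rewrite cards0 subn0 (Pm_eq vS uS) -cSf -(Pm_sum uS); lia.
Qed.

End Avg.


Section Blocks.
Variables (T : finType) (e : rel T).
Hypotheses (e_sym : symmetric e) (e_irr : irreflexive e).
Notation cS A := (connect (induced_rel e A)).
Implicit Types (A B : {set T}).

Lemma Blk_clique : Blk e -> forall A, block e A -> clique e A.
Proof.
move=> blk A /maxsetP [/and3P [_ cA /forall_inP HA] _].
have aux n : forall x p, size p <= n -> path (induced_rel e A) x p ->
    x != last x p -> e x (last x p).
  elim: n => [|n IH] x [|a p] //=; try by rewrite eqxx.
  move=> hs /andP [hxa hp]; case: p hs hp => [|b q] hs hp /=.
    by move=> _; case/and3P: hxa.
  case/andP: hp => hab hq ne.
  case/and3P: hxa => exa xA aA; case/and3P: hab => eab _ bA.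
  case: (eqVneq b x) => [bx | bx].
    by rewrite bx in hq ne *; apply: IH => //; rewrite /= in hs; lia.
  case: (boolP (e x b)) => exb.
    apply: (IH x (b :: q)); [rewrite /= in hs *; lia | by apply/andP; split; [rewrite /induced_rel /= exb xA bA | exact: hq] | by []].
  exfalso; move/negP: exb; apply.
  apply: (blk a); [by rewrite e_sym | by [] | by rewrite eq_sym | ].
  have xa : x != a by apply: contraTneq exa => ->; rewrite e_irr.
  have ba : b != a by apply: contraTneq eab => ->; rewrite e_irr.
  have := HA a aA; move=> /forall_inP /(_ x); rewrite !inE xa xA => /(_ isT).
  move=> /forall_inP /(_ b); rewrite !inE ba bA => /(_ isT) c.
  apply: cS_mono c; apply/subsetP => w; rewrite !inE => /andP [].
  done.
apply/forall_inP => x xA; apply/forall_inP => y yA; apply/implyP => ne.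
move: ne; move: cA => /forall_inP /(_ x xA) /forall_inP /(_ y yA) /connectP [p hp ->].
by apply: (aux (size p)).
Qed.


Lemma path_conn B x q : path e x q -> {subset x :: q <= B} ->
  forall y, y \in x :: q -> cS B x y.
Proof.
elim: q x => [|a q IH] x /=.
  by move=> _ _ y; rewrite inE => /eqP ->.
case/andP=> exa hq sub y; rewrite inE => /orP [/eqP -> //|yin].
apply: connect_trans (IH a hq _ y yin).
  apply: cS_edge => //; apply: sub; rewrite !inE eqxx ?orbT //.
by move=> w win; apply: sub; rewrite inE win orbT.
Qed.

Lemma path_in B x p : path (induced_rel e B) x p -> {subset p <= B}.
Proof.
elim: p x => [|a p IH] x //= /andP [/and3P [_ _ aB] hp] w.
by rewrite inE => /orP [/eqP ->|]; [| apply: IH hp w].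
Qed.

Lemma conn_path a q : path e a q -> conn_set e [set x in a :: q].
Proof.
move=> hq.
have sub : {subset a :: q <= [set x in a :: q]} by move=> w win; rewrite !inE in win *.
apply/forall_inP => x xin; apply/forall_inP => y yin.
have xin' : x \in a :: q by move: xin; rewrite !inE.
have yin' : y \in a :: q by move: yin; rewrite !inE.
apply: connect_trans (_ : cS [set x in a :: q] x a) (path_conn hq sub yin').
by rewrite (cS_sym e_sym); exact: (path_conn hq sub xin').
Qed.

Lemma conn_seq c : path.cycle e c -> conn_set e [set x in c].
Proof.
case: c => [|a q] cyc.
  by apply/forall_inP => x; rewrite inE.
by move: cyc; rewrite /= rcons_path => /andP [hq _]; apply: conn_path.
Qed.

Lemma cyc_conn c w : uniq c -> path.cycle e c -> w \in c ->
  conn_set e ([set x in c] :\ w).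
Proof.
move=> un cyc wc; case: (rot_to wc) => i q Hr.
have cyc' : path.cycle e (w :: q) by rewrite -Hr rot_cycle.
have un' : uniq (w :: q) by rewrite -Hr rot_uniq.
have EA : [set x in c] :\ w = [set x in q].
  apply/setP => y; rewrite !inE -(mem_rot i c) Hr inE.
  case: (eqVneq y w) => //= ->; by move: un' => /= /andP [/negbTE ->].
rewrite EA; case: q cyc' {un' EA Hr} => [|a q] cyc'.
  by apply/forall_inP => x; rewrite inE.
apply: conn_path; move: cyc'; rewrite /= rcons_path => /andP [_ /andP [hq _]].
exact: hq.
Qed.

Lemma clique_Blk : (forall A, block e A -> clique e A) -> Blk e.
Proof.
move=> H v u1 u2 ev1 ev2 ne c.
case/connectP: c => p0 hp0 l0; subst u2.
case: (shortenP hp0) ev2 ne => p hp up _ ev2 ne.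
have u1v : u1 != v by apply: contraTneq ev1 => ->; rewrite e_irr.
have pv : {subset p <= [set~ v]} := path_in hp.
have vnot : v \notin u1 :: p.
  rewrite inE negb_or eq_sym u1v /=; apply/negP => /pv; by rewrite !inE eqxx.
have hpe : path e u1 p by apply: sub_path hp => a b /and3P [].
set c := v :: u1 :: p.
have unc : uniq c by rewrite /c cons_uniq vnot up.
have cyc : path.cycle e c by rewrite /c /= ev1 rcons_path hpe e_sym ev2.
set A := [set x in c].
have bic : biconnected_set e A.
  apply/and3P; split.
  - by apply/set0Pn; exists v; rewrite !inE eqxx.
  - exact: conn_seq cyc.
  - by apply/forall_inP => w wA; apply: cyc_conn unc cyc _; move: wA; rewrite !inE.
case: (maxset_exists bic) => B mB sAB.
have cB : clique e B := H B mB.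
have u1B : u1 \in B by apply: (subsetP sAB); rewrite !inE eqxx orbT.
have lB : last u1 p \in B.
  apply: (subsetP sAB); have := mem_last u1 p; rewrite !inE => ->; by rewrite orbT.
by move/forall_inP: cB => /(_ u1 u1B) /forall_inP /(_ _ lB) /implyP; apply.
Qed.

End Blocks.

Import Order.TTheory GRing.Theory Num.Theory.


Lemma perm3 (T : finType) (x0 x1 x2 y0 y1 y2 : T) :
  x0 != x1 -> x0 != x2 -> x1 != x2 -> y0 != y1 -> y0 != y2 -> y1 != y2 ->
  exists s : {perm T}, [/\ s x0 = y0, s x1 = y1 & s x2 = y2].
Proof.
move=> h01 h02 h12 g01 g02 g12.
set t1 := tperm x0 y0; set a1 := t1 x1; set a2 := t1 x2.
set t2 := tperm a1 y1; set b2 := t2 a2; set t3 := tperm b2 y2.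
exists (t1 * t2 * t3)%g; rewrite !permM.
have ia1 : a1 != y0 by rewrite /a1 -(tpermL x0 y0) -/t1 (inj_eq perm_inj) eq_sym.
have t2y0 : t2 y0 = y0 by rewrite /t2 tpermD // eq_sym.
have ib0 : b2 != y0.
  by rewrite /b2 -t2y0 (inj_eq perm_inj) /a2 -(tpermL x0 y0) -/t1 (inj_eq perm_inj) eq_sym.
have ib1 : b2 != y1.
  rewrite /b2 -(tpermL a1 y1) -/t2 (inj_eq perm_inj) /a2 /a1 (inj_eq perm_inj) eq_sym //.
split.
- by rewrite /t1 tpermL -/t1 t2y0 /t3 tpermD // eq_sym.
- by rewrite -/a1 /t2 tpermL -/t2 /t3 tpermD // eq_sym.
- by rewrite -/a2 -/b2 /t3 tpermL.
Qed.

Local Open Scope ring_scope.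

Theorem theorem1 (T : finType) (e : rel T)
  (e_sym : symmetric e) (e_irr : irreflexive e)
  (T_nonempty : (0 < #|T|)%N) (G_conn : connected_graph e) :
  ((#|T|.-1)%:R / 2 : rat) <= \sum_(f in edges e) 1 / ((#|common_nbhd e f|)%:R + 2)
  /\
  (\sum_(f in edges e) 1 / ((#|common_nbhd e f|)%:R + 2) = ((#|T|.-1)%:R / 2 : rat)
   <-> (forall A : {set T}, block e A -> clique e A)).
Proof.
set n := #|T|; set N := #|{perm T}|.
have N0 : (0 < N)%N by apply/card_gt0P; exists 1%g.
set gT := fun s : {perm T} => goodT e (rk s).
have F1 s : (n <= gT s + 1)%N.
  exact: (final e_sym e_irr (@rk_inj _ s) (rk_lt s) G_conn T_nonempty).1.
have F2 s : Blk e -> n = (gT s + 1)%N.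
  exact: (final e_sym e_irr (@rk_inj _ s) (rk_lt s) G_conn T_nonempty).2.
set X := (\sum_s gT s)%N.
have key : \sum_(f in edges e) 1 / ((#|common_nbhd e f|)%:R + 2) = (X%:R / (2 * N)%:R : rat).
  have h1 f : f \in edges e -> 1 / ((#|common_nbhd e f|)%:R + 2) = (#|Gs e f|)%:R / (2 * N)%:R :> rat.
    move=> /edgesP [u [v [euv ->]]].
    have Hc := Gs_card e_irr euv.
    have g0 : (#|Gs e [set u; v]|)%:R != 0 :> rat.
      rewrite pnatr_eq0; apply/eqP => g0; move: Hc; rewrite g0 mul0n.
      by move: N0; rewrite /N; lia.
    rewrite -Hc natrM natrD; field.
    by rewrite g0 /= -(natrD _ _ 2) pnatr_eq0 addn2.
  rewrite (eq_bigr _ h1) -mulr_suml -natr_sum.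
  congr (_%:R / _); rewrite /X /gT /goodT.
  rewrite (eq_bigr (fun f => \sum_s (if goodf e (rk s) f then 1 else 0))%N); last first.
    by move=> f _; rewrite -sum1_card big_mkcond; apply: eq_bigr => s _; rewrite inE.
  rewrite exchange_big /=; apply: eq_bigr => s _.
  rewrite -sum1_card big_mkcond [RHS]big_mkcond /=; apply: eq_bigr => f _.
  by case: (boolP (f \in edges e)) => H; rewrite in_set ?H ?(negbTE H) //=; case: (goodf e (rk s) f).
have E : (n.-1)%:R / 2 = ((N * n.-1)%:R / (2 * N)%:R : rat).
  rewrite !natrM; field; by rewrite pnatr_eq0 -lt0n N0.
have D0 : (2 * N)%:R^-1 != 0 :> rat by rewrite invr_eq0 pnatr_eq0 muln_eq0 /= -lt0n N0.
rewrite key E; split.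
  rewrite ler_wpM2r // ?ler_nat ?invr_ge0 ?ler0n //.
  rewrite /X; have -> : (N * n.-1 = \sum_(s : {perm T}) n.-1)%N by rewrite sum_nat_const.
  by apply: leq_sum => s _; have := F1 s; lia.
split.
- move=> /(mulIf D0) /eqP; rewrite eqr_nat => /eqP HX.
  have Dd s : gT s = (n.-1 + (gT s - n.-1))%N by have := F1 s; lia.
  have HD : (\sum_s (gT s - n.-1) = 0)%N.
    move: HX; rewrite /X (eq_bigr _ (fun s _ => Dd s)) big_split /= sum_nat_const -/N.
    by move/eqP; rewrite -{2}[(N * n.-1)%N]addn0 eqn_add2l => /eqP.
  have blk : Blk e.
    move=> v u1 u2 ev1 ev2 ne c; apply/negPn/negP => n12.
    have v1 : v != u1 by apply: contraTneq ev1 => ->; rewrite e_irr.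
    have v2 : v != u2 by apply: contraTneq ev2 => ->; rewrite e_irr.
    have n3 : (2 < n)%N.
      have : #|[set u1; u2; v]| = 3%N.
        rewrite -setUA cardsU1 cards2 !inE negb_or ne eq_sym v1 eq_sym v2.
        by [].
      by move=> <-; apply: max_card.
    have i0 : (0 < n)%N by lia.
    have i1 : (1 < n)%N by lia.
    have i2 : (n.-1 < n)%N by lia.
    pose y0 := @enum_val T T (Ordinal i0).
    pose y1 := @enum_val T T (Ordinal i1).
    pose y2 := @enum_val T T (Ordinal i2).
    have ey k l (hk : (k < n)%N) (hl : (l < n)%N) : k != l ->
        @enum_val T T (Ordinal hk) != @enum_val T T (Ordinal hl).
      by move=> kl; rewrite (inj_eq enum_val_inj).
    have [s [s0 s1 s2]] : exists s : {perm T}, [/\ s u1 = y0, s u2 = y1 & s v = y2].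
      apply: perm3 => //; try by rewrite eq_sym.
      - exact: ey.
      - by apply: ey; lia.
      - by apply: ey; lia.
    have r0 : rk s u1 = 0%N by rewrite /rk s0 /y0 enum_valK.
    have r1 : rk s u2 = 1%N by rewrite /rk s1 /y1 enum_valK.
    have r2 : rk s v = n.-1 by rewrite /rk s2 /y2 enum_valK.
    have rinj := @rk_inj _ s.
    have hle : (n <= gT s)%N.
      apply: (finalC e_sym e_irr rinj G_conn ev1 ev2 ne n12 c).
      - move=> w wu; rewrite r0 lt0n; apply: contra wu => /eqP H.
        by apply/eqP; apply: rinj; rewrite H r0.
      - move=> w wu1 wu2; rewrite r1; case: (ltngtP 1 (rk s w)) => // H.
          have : rk s w = 0%N by lia.
          by rewrite -r0 => /rinj /eqP; rewrite (negbTE wu1).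
        by move/esym: H; rewrite -r1 => /rinj /eqP; rewrite (negbTE wu2).
      - move=> w wv; rewrite r2; have := rk_lt s w; rewrite -/n => H.
        have : rk s w != n.-1 by apply: contra wv => /eqP; rewrite -r2 => /rinj ->.
        lia.
    move/eqP: HD; rewrite sum_nat_eq0 => /forallP /(_ s) /eqP.
    lia.
  exact: Blk_clique e_sym e_irr blk.
- move=> H; have blk := clique_Blk e_sym e_irr H.
  suff -> : X = (N * n.-1)%N by [].
  rewrite /X (eq_bigr (fun _ => n.-1)) ?sum_nat_const //.
  by move=> s _; have := F2 s blk; lia.
Qed.
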